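(* Work in homotopy type theory with univalence and function extensionality. For any types $A, B$ and any function $f : A \to B$, the type \[ \mathsf{ish2adj}\, f :\equiv \sum_{g : B \to A} \ \sum_{\eta : gf \sim \mathsf{id}_A} \ \sum_{\varepsilon : fg \sim \mathsf{id}_B} \ \sum_{\tau : f[\eta] \sim \varepsilon_{f}} \ \sum_{\theta : \eta_{g} \sim g[\varepsilon]} \ \big(\mathsf{Coh}\, \eta \cdot g \llbracket \tau \rrbracket \sim \theta_f\big) \] is a proposition (any two of its elements are equal).
   Context: Notation: for $h : X \to Y$ and a path $p : x = y$, $h[p] : hx = hy$ denotes $\mathsf{ap}_h(p)$; for 2-paths $\alpha : p = q$, $h\llbracket \alpha \rrbracket : h[p] = h[q]$ denotes the action of $h$ on 2-paths. A homotopy $H : f \sim g$ is an element of $\prod_x f x = g x$. For $H : f \sim g$ with $f,g : A \to B$: for $k : C \to A$, $H_k : fk \sim gk$ is $\lambda c.\, H_{k c}$; for $h : B \to C$, $h[H] : hf \sim hg$ is $\lambda x.\, h[H_x]$; for $\alpha : H \sim H'$ (i.e. $\prod_x H_x = H'_x$), $h\llbracket \alpha \rrbracket : h[H] \sim h[H']$ is $\lambda x.\, h\llbracket \alpha_x \rrbracket$. Concatenation $H \cdot H'$ of homotopies (and of homotopies between homotopies) is pointwise path concatenation in diagrammatic order. For $f : A \to B$, $g : B \to A$ and $H : gf \sim \mathsf{id}_A$, the homotopy $\mathsf{Coh}\, H : H_{gf} \sim g[f[H]]$ is defined pointwise: $(\mathsf{Coh}\, H)_x : H_{g(f x)} = g[f[H_x]]$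 is the concatenation of the path $H_{g(fx)} = (gf)[H_x]$ given by naturality of $H$ (applied to the path $H_x$, cancelling $H_x$) with the functoriality path $(gf)[H_x] = g[f[H_x]]$. *)

(* Defs.v *)
(* Rocq's [eq] lives in Prop (and proof irrelevance is whitelisted), so we
   use a Type-valued identity type [paths] as in the HoTT library. *)

Inductive paths {A : Type} (a : A) : A -> Type :=
  idpath : paths a a.
Arguments idpath {A a}.

Definition concat {A : Type} {x y z : A} (p : paths x y) (q : paths y z)
  : paths x z :=
  match q in paths _ z return paths x z with idpath => p end.

Definition inverse {A : Type} {x y : A} (p : paths x y) : paths y x :=
  match p in paths _ y return paths y x with idpath => idpath end.

(* h[p] = ap_h(p) *)
Definition ap {A B : Type} (h : A -> B) {x y : A} (p : paths x y)
  : paths (h x) (h y) :=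
  match p in paths _ y return paths (h x) (h y) with idpath => idpath end.

Definition homotopy {A : Type} {P : A -> Type} (f g : forall x, P x) : Type :=
  forall x, paths (f x) (g x).

Definition happly {A : Type} {P : A -> Type} {f g : forall x, P x}
  (p : paths f g) : homotopy f g :=
  fun x => match p in paths _ g return paths (f x) (g x) with idpath => idpath end.

Definition IsEquiv {X Y : Type} (e : X -> Y) : Type :=
  prod { s : Y -> X & forall y, paths (e (s y)) y }
       { r : Y -> X & forall x, paths (r (e x)) x }.

Definition Funext : Type :=
  forall (A : Type) (P : A -> Type) (f g : forall x, P x),
    IsEquiv (@happly A P f g).

Definition IsHProp (X : Type) : Type := forall u v : X, paths u v.

Definition nat_to_id {A : Type} {h : A -> A} (H : forall x, paths (h x) x)
  {x y : A} (p : paths x y) : paths (concat (H x) p) (concat (ap h p) (H y)).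
Proof. destruct p. destruct (H x). reflexivity. Defined.

Definition cancelR {A : Type} {x y z : A} (a b : paths x y) (q : paths y z)
  (e : paths (concat a q) (concat b q)) : paths a b.
Proof. destruct q. exact e. Defined.

Definition ap_compose {A B C : Type} (f : A -> B) (g : B -> C) {x y : A}
  (p : paths x y) : paths (ap (fun a => g (f a)) p) (ap g (ap f p)).
Proof. destruct p. reflexivity. Defined.

(* Coh H : H_{gf} ~ g[f[H]],
   (Coh H)_x := (H_{g(fx)} = (gf)[H_x] by naturality, cancelling H_x)
                . ((gf)[H_x] = g[f[H_x]]) *)
Definition Coh {A B : Type} {f : A -> B} {g : B -> A}
  (H : forall x, paths (g (f x)) x) :
  forall x, paths (H (g (f x))) (ap g (ap f (H x))) :=
  fun x => concat
    (cancelR (H (g (f x))) (ap (fun a => g (f a)) (H x)) (H x)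
       (nat_to_id (h := fun a => g (f a)) H (H x)))
    (ap_compose f g (H x)).

Definition ish2adj {A B : Type} (f : A -> B) : Type :=
  { g : B -> A &
  { eta : forall a, paths (g (f a)) a &
  { eps : forall b, paths (f (g b)) b &
  { tau : forall a, paths (ap f (eta a)) (eps (f a)) &
  { theta : forall b, paths (eta (g b)) (ap g (eps b)) &
    forall a, paths (concat (Coh eta a) (ap (ap g) (tau a))) (theta (f a))
  } } } } }.

(* Main.v *)
Require Import Defs.

Definition Contr (X : Type) := {c : X & forall x, paths c x}.

Definition contr_hprop X : Contr X -> IsHProp X.
Proof. intros [c h] u v. exact (concat (inverse (h u)) (h v)). Defined.

Definition retract_contr X Y (r : Y -> X) (s : X -> Y)
  (H : forall x, paths (r (s x)) x) : Contr Y -> Contr X.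
Proof. intros [c h]. exists (r c). intro x. exact (concat (ap r (h (s x))) (H x)). Defined.

Definition concat_1p {A} {x y : A} (p : paths x y) : paths (concat idpath p) p.
Proof. destruct p; reflexivity. Defined.

Definition concat_Vp {A} {x y : A} (p : paths x y) : paths (concat (inverse p) p) idpath.
Proof. destruct p; reflexivity. Defined.

Definition contr_paths X (H : Contr X) (x y : X) : Contr (paths x y).
Proof. destruct H as [c h]. exists (concat (inverse (h x)) (h y)). intro e. destruct e. apply concat_Vp. Defined.

Definition contr_sigma A (B : A -> Type) : Contr A -> (forall a, Contr (B a)) -> Contr {a : A & B a}.
Proof.
  intros [a0 h] HB. exists (existT _ a0 (projT1 (HB a0))). intros [a b].
  revert b. generalize (h a). intro e. destruct e. intro b.
  exact (ap (existT B a0) (projT2 (HB a0) b)).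
Defined.

Definition path_forall (fe : Funext) {A} {P : A -> Type} {f g : forall x, P x}
  (h : homotopy f g) : paths f g := projT1 (fst (fe A P f g)) h.

Definition contr_forall (fe : Funext) A (P : A -> Type) : (forall a, Contr (P a)) -> Contr (forall a, P a).
Proof. intros H. exists (fun a => projT1 (H a)). intro k. apply (path_forall fe). intro a. exact (projT2 (H a) (k a)). Defined.

Definition contr_single X (x : X) : Contr {y : X & paths x y}.
Proof. exists (existT _ x idpath). intros [y p]. destruct p. reflexivity. Defined.

Definition transport {A} (P : A -> Type) {x y} (p : paths x y) (u : P x) : P y :=
  match p with idpath => u end.

Definition contr_sig_forall (fe : Funext) U (HU : Contr U) (X : Type) (Q : U -> X) :
  Contr {t : X & forall u, paths (Q u) t}.
Proof.
  destruct HU as [u0 h].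
  apply (retract_contr _ {t : X & paths (Q u0) t}
    (fun w : {t : X & paths (Q u0) t} => existT (fun t => forall u, paths (Q u) t) (projT1 w) (fun u => concat (ap Q (inverse (h u))) (projT2 w)))
    (fun w : {t : X & forall u, paths (Q u) t} => existT (fun t => paths (Q u0) t) (projT1 w) (projT2 w u0))).
  - intros [t k]. simpl. apply (ap (existT _ t)). apply (path_forall fe). intro u.
    generalize (h u). intro a. destruct a. apply concat_1p.
  - apply contr_single.
Defined.

Section S.
Variables (A B : Type) (f : A -> B).

Definition fib (b : B) := {x : A & paths (f x) b}.

Definition path_fib {x' x : A} {y : B} (p : paths (f x') y) (q : paths (f x) y)
  (w : {g : paths x' x & paths (concat (ap f g) q) p}) :
  paths (existT (fun z => paths (f z) y) x' p) (existT (fun z => paths (f z) y) x q).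
Proof. destruct w as [g e]. destruct g. destruct e. exact (ap (existT _ x') (concat_1p q)). Defined.

Definition fib_path {y : B} (u v : fib y) (e : paths u v) :
  {g : paths (projT1 u) (projT1 v) & paths (concat (ap f g) (projT2 v)) (projT2 u)}.
Proof. destruct e. exists idpath. apply concat_1p. Defined.

Definition fib_retr {x' x : A} {y : B} (p : paths (f x') y) (q : paths (f x) y)
  (w : {g : paths x' x & paths (concat (ap f g) q) p}) :
  paths (fib_path (existT _ x' p) (existT _ x q) (path_fib p q w)) w.
Proof. destruct w as [g e]. destruct g. destruct e. destruct q. reflexivity. Defined.

Definition contr_fib (g : B -> A) (eta : forall a, paths (g (f a)) a)
  (eps : forall b, paths (f (g b)) b)
  (tau : forall a, paths (ap f (eta a)) (eps (f a))) : forall b, Contr (fib b).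
Proof.
  intro b. exists (existT _ (g b) (eps b)). intros [x p]. destruct p.
  apply (path_fib (eps (f x)) idpath). exists (eta x). exact (tau x).
Defined.

Variable fe : Funext.
Variable HF : forall b, Contr (fib b).

Definition layer1 : Contr {g : B -> A & forall b, paths (f (g b)) b}.
Proof.
  apply (retract_contr _ (forall b, fib b)
    (fun w => existT _ (fun b => projT1 (w b)) (fun b => projT2 (w b)))
    (fun (w : {g : B -> A & forall b, paths (f (g b)) b}) b => existT (fun x => paths (f x) b) (projT1 w b) (projT2 w b))).
  - intros [g e]. reflexivity.
  - apply contr_forall; assumption.
Defined.

Definition layer2 (g : B -> A) (eps : forall b, paths (f (g b)) b) :
  Contr {eta : forall a, paths (g (f a)) a & forall a, paths (ap f (eta a)) (eps (f a))}.
Proof.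
  apply (retract_contr _ (forall a, {gm : paths (g (f a)) a & paths (ap f gm) (eps (f a))})
    (fun w => existT _ (fun a => projT1 (w a)) (fun a => projT2 (w a)))
    (fun (w : {eta : forall a, paths (g (f a)) a & forall a, paths (ap f (eta a)) (eps (f a))}) a =>
       existT (fun gm => paths (ap f gm) (eps (f a))) (projT1 w a) (projT2 w a))).
  - intros [e t]. reflexivity.
  - apply contr_forall; try assumption. intro a.
    apply (retract_contr _ (paths (existT (fun z => paths (f z) (f a)) (g (f a)) (eps (f a)))
                                  (existT (fun z => paths (f z) (f a)) a idpath))
             (fib_path _ _) (path_fib (eps (f a)) idpath)).
    + intro w. apply (fib_retr (eps (f a)) idpath w).
    + apply contr_paths. apply HF.
Defined.

Definition layer3 (P : B -> Type) (c : forall a, P (f a)) :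
  Contr {th : forall b, P b & forall a, paths (c a) (th (f a))}.
Proof.
  apply (retract_contr _ (forall b, {t : P b & forall u : fib b, paths (transport P (projT2 u) (c (projT1 u))) t})
    (fun w => existT _ (fun b => projT1 (w b)) (fun a => projT2 (w (f a)) (existT _ a idpath)))
    (fun (z : {th : forall b, P b & forall a, paths (c a) (th (f a))}) b => existT (fun t => forall u : fib b, paths (transport P (projT2 u) (c (projT1 u))) t) (projT1 z b) (fun u => match u with existT _ x p =>
        match p in paths _ b' return paths (transport P p (c x)) (projT1 z b') with
        idpath => projT2 z x end end))).
  - intros [th k]. reflexivity.
  - apply contr_forall; try assumption. intro b. apply contr_sig_forall; auto.
Defined.

End S.

Theorem theorem3p6 (fe : Funext) (A B : Type) (f : A -> B) :
  IsHProp (ish2adj f).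
Proof.
  intros u v. apply contr_hprop.
  destruct u as [g [eta [eps [tau _]]]].
  pose proof (contr_fib A B f g eta eps tau) as HF.
  unshelve eapply (retract_contr _
    {ge : {g : B -> A & forall b, paths (f (g b)) b} &
     {et : {eta : forall a, paths (projT1 ge (f a)) a & forall a, paths (ap f (eta a)) (projT2 ge (f a))} &
      {th : forall b, paths (projT1 et (projT1 ge b)) (ap (projT1 ge) (projT2 ge b)) &
       forall a, paths (concat (@Coh A B f (projT1 ge) (projT1 et) a) (ap (ap (projT1 ge)) (projT2 et a))) (th (f a))}}}).
  - intros [[g' eps'] [[eta' tau'] [th' k']]]. exists g', eta', eps', tau', th'. exact k'.
  - intros [g' [eta' [eps' [tau' [th' k']]]]].
    exists (existT _ g' eps'). exists (existT _ eta' tau'). exists th'. exact k'.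
  - intros [g' [eta' [eps' [tau' [th' k']]]]]. reflexivity.
  - apply contr_sigma. apply layer1; assumption.
    intro ge. apply contr_sigma. apply layer2; assumption.
    intro et. apply (layer3 A B f fe HF (fun b => paths (projT1 et (projT1 ge b)) (ap (projT1 ge) (projT2 ge b)))
      (fun a => concat (@Coh A B f (projT1 ge) (projT1 et) a) (ap (ap (projT1 ge)) (projT2 et a)))).
Qed.
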